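(* Let $X$ be a real or complex Banach space, $(A(n))_{n\in\mathbb{N}}$ a sequence in $\mathcal{B}(X)$, and $P:\mathbb{N}\to\mathcal{B}(X)$ a family of projections compatible with the system $x_{n+1}=A(n)x_n$, with complementary family $Q(n)=I-P(n)$. Then the system is $P$-exponentially dichotomic if and only if there exist constants $D\ge1$, $d>0$ and $c\ge0$ such that \[ \sum_{j=n}^{\infty}e^{d(j-n)}\|\mathcal{A}_P(j,p)x\|+\sum_{k=n}^{m}e^{d(m-k)}\|\mathcal{A}_Q(k,n)x\|\le D\big(e^{cn}\|\mathcal{A}_P(n,p)x\|+e^{cm}\|\mathcal{A}_Q(m,n)x\|\big) \] for all $(m,n,p)\in T$ and all $x\in X$.
   Context: $\mathbb{N}$ denotes the set of positive integers; $\mathcal{B}(X)$ is the Banach algebra of bounded linear operators on $X$, and $I$ is the identity operator. $\Delta=\{(m,n)\in\mathbb{N}^2: m\ge n\}$ and $T=\{(m,n,p)\in\mathbb{N}^3: m\ge n\ge p\}$. A family of projections is a map $P:\mathbb{N}\to\mathcal{B}(X)$ with $P(n)^2=P(n)$ for all $n$; its complementary family is $Q(n)=I-P(n)$. $P$ is compatible with the system $x_{n+1}=A(n)x_n$ if $A(n+1)P(n)=P(n+1)A(n+1)$ for all $n\in\mathbb{N}$. For $(m,n)\in\Delta$ define $\mathcal{A}_P(m,n)=A(m)\cdots A(n+1)P(n)$ if $m>n$ and $\mathcal{A}_P(n,n)=P(n)$; similarly $\mathcal{A}_Q(m,n)=A(m)\cdots A(n+1)Q(n)$ if $m>n$ and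 $\mathcal{A}_Q(n,n)=Q(n)$. The system is $P$-exponentially dichotomic if there exist constants $N\ge1$, $\alpha>0$ and $\beta\ge0$ such that $e^{\alpha(m-n)}\big(\|\mathcal{A}_P(m,n)x\|+\|Q(n)x\|\big)\le N\big(e^{\beta n}\|P(n)x\|+e^{\beta m}\|\mathcal{A}_Q(m,n)x\|\big)$ for all $(m,n)\in\Delta$, $x\in X$. *)

(* Defs.v *)
From HB Require Import structures.
From mathcomp Require Import all_boot all_order all_algebra.
From mathcomp Require Import all_classical all_reals all_analysis.
Set Implicit Arguments. Unset Strict Implicit. Unset Printing Implicit Defensive.
Import Order.TTheory GRing.Theory Num.Theory.
Import numFieldNormedType.Exports.
Local Open Scope ring_scope.

Fixpoint Acomp {R : realType} {X : normedModType R} (A : nat -> X -> X)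
  (n k : nat) (x : X) : X :=
  match k with
  | 0 => x
  | k'.+1 => A (n + k'.+1)%N (Acomp A n k' x)
  end.

Definition compl_fam {R : realType} {X : normedModType R}
  (P : nat -> X -> X) : nat -> X -> X := fun n x => x - P n x.

(* A_P(m,n) = A(m)...A(n+1)P(n) (m > n), A_P(n,n) = P(n); used only for m >= n *)
Definition calA {R : realType} {X : normedModType R}
  (A P : nat -> X -> X) (m n : nat) (x : X) : X :=
  Acomp A n (m - n) (P n x).

Definition P_exp_dichotomic {R : realType} {X : normedModType R}
  (A P : nat -> X -> X) : Prop :=
  exists N alpha beta : R, 1 <= N /\ 0 < alpha /\ 0 <= beta /\
    forall m n : nat, (0 < n)%N -> (n <= m)%N -> forall x : X,
      expR (alpha * (m%:R - n%:R)) *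
        (`|calA A P m n x| + `|compl_fam P n x|)
      <= N * (expR (beta * n%:R) * `|P n x|
              + expR (beta * m%:R) * `|calA A (compl_fam P) m n x|).

(* Main.v *)
Require Import Defs.
From HB Require Import structures.
From mathcomp Require Import all_boot all_order all_algebra.
From mathcomp Require Import all_classical all_reals all_analysis.
From mathcomp Require Import ring lra zify.
Import Order.TTheory GRing.Theory Num.Theory.
Import numFieldNormedType.Exports.
Local Open Scope ring_scope.

Section Helpers.
Variables (R : realType) (X : normedModType R) (A : nat -> {linear X -> X}).
Let Af := fun i => A i : X -> X.

Lemma AcompB n k x y : Acomp Af n k (x - y) = Acomp Af n k x - Acomp Af n k y.
Proof. by elim: k => [|k IH] //=; rewrite IH /Af linearB. Qed.

Lemma Acomp0 n k : Acomp Af n k 0 = 0.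
Proof. by elim: k => [|k IH] //=; rewrite IH /Af linear0. Qed.

Lemma AcompD n a b y : Acomp Af n (a + b) y = Acomp Af (n + a) b (Acomp Af n a y).
Proof. elim: b => [|b IH]; first by rewrite addn0.
by rewrite addnS /= IH !addnS addnA. Qed.

Lemma AcompP (P : nat -> {linear X -> X})
  (hc : forall n : nat, (0 < n)%N -> forall x : X, A n.+1 (P n x) = P n.+1 (A n.+1 x))
  n k y : (0 < n)%N -> P (n + k)%N (Acomp Af n k y) = Acomp Af n k (P n y).
Proof. move=> n0; elim: k => [|k IH] /=; first by rewrite addn0.
by rewrite -IH /Af addnS hc // addn_gt0 n0. Qed.

Lemma geom_nat (r : R) n M : 0 <= r < 1 -> \sum_(n <= j < M) r ^+ (j - n) <= (1 - r)^-1.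
Proof.
case/andP=> r0 r1.
have [Mn|nM] := leqP M n; first by rewrite big_geq // invr_ge0 subr_ge0 ltW.
rewrite -{1}(add0n n) big_addn.
rewrite (eq_bigr (fun i => r ^+ i)); last by move=> i _; rewrite addnK.
rewrite big_mkord.
have h1 : 0 < 1 - r by rewrite subr_gt0.
rewrite -[X in _ <= X]mul1r ler_pdivlMr //.
have -> : (\sum_(i < M - n) r ^+ i) * (1 - r) = 1 - r ^+ (M - n).
  by rewrite mulrC -opprB mulNr -subrX1 opprB.
by rewrite lerBlDr lerDl exprn_ge0.
Qed.
End Helpers.

Theorem mainTheorem4 (R : realType) (X : completeNormedModType R)
  (A P : nat -> {linear X -> X})
  (hA : forall n : nat, (0 < n)%N -> continuous (A n))
  (hP : forall n : nat, (0 < n)%N -> continuous (P n))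
  (hPproj : forall n : nat, (0 < n)%N -> forall x : X, P n (P n x) = P n x)
  (hcompat : forall n : nat, (0 < n)%N -> forall x : X,
      A n.+1 (P n x) = P n.+1 (A n.+1 x)) :
  P_exp_dichotomic (fun n => A n : X -> X) (fun n => P n : X -> X) <->
  exists D d c : R, 1 <= D /\ 0 < d /\ 0 <= c /\
    forall m n p : nat, (0 < p)%N -> (p <= n)%N -> (n <= m)%N -> forall x : X,
      ((\sum_(n <= j <oo)
          (expR (d * (j%:R - n%:R)) *
             `|calA (fun i => A i : X -> X) (fun i => P i : X -> X) j p x|)%:E)
       + (\sum_(n <= k < m.+1)
          expR (d * (m%:R - k%:R)) *
             `|calA (fun i => A i : X -> X)
                 (compl_fam (fun i => P i : X -> X)) k n x|)%:E <=
       (D * (expR (c * n%:R) *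
               `|calA (fun i => A i : X -> X) (fun i => P i : X -> X) n p x|
             + expR (c * m%:R) *
               `|calA (fun i => A i : X -> X)
                   (compl_fam (fun i => P i : X -> X)) m n x|))%:E)%E.
Proof.
set Af := (fun i => A i : X -> X).
set Pf := (fun i => P i : X -> X).
split.
  case=> N [al [be [N1 [al0 [be0 Hd]]]]].
  set r := expR (- (al / 2)).
  have r0 : 0 <= r by exact: expR_ge0.
  have r1 : r < 1 by rewrite /r expR_lt1 oppr_lt0 divr_gt0.
  have h1r : 0 < 1 - r by rewrite subr_gt0.
  have N0 : 0 <= N by apply: le_trans ler01 N1.
  exists (N / (1 - r)), (al / 2), be.
  split; first by rewrite ler_pdivlMr // mul1r; lra.
  split; first by rewrite divr_gt0.
  split=> // m n p p0 pn nm x.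
  have n0 : (0 < n)%N by apply: leq_trans pn.
  have ec : forall a b : nat, (a <= b)%N ->
      expR (al / 2 * (b%:R - a%:R)) = expR (al * (b%:R - a%:R)) * r ^+ (b - a).
    move=> a b ab; rewrite /r -expRM_natl natrB // -expRD; by congr expR; field.
  set C1 := N * (expR (be * n%:R) * `|calA Af Pf n p x|).
  set C2 := N * (expR (be * m%:R) * `|calA Af (compl_fam Pf) m n x|).
  have T1 : forall j, (n <= j)%N ->
      expR (al * (j%:R - n%:R)) * `|calA Af Pf j p x| <= C1.
    move=> j nj.
    set y := calA Af Pf n p x.
    have Py : P n y = y.
      rewrite /y /calA -{1}(subnKC pn) AcompP // hPproj //.
    have Qy : compl_fam Pf n y = 0 by rewrite /compl_fam /Pf /= Py subrr.
    have := Hd j n n0 nj y.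
    rewrite /calA Qy Acomp0 normr0 mulr0 !addr0 /Pf /= Py.
    have -> : Acomp Af n (j - n) y = Acomp Af p (j - p) (P p x).
      have -> : (j - p = (n - p) + (j - n))%N by lia.
      by rewrite AcompD (subnKC pn).
    by rewrite /C1 mulrA.
  have T2 : forall k, (n <= k)%N -> (k <= m)%N ->
      expR (al * (m%:R - k%:R)) * `|calA Af (compl_fam Pf) k n x| <= C2.
    move=> k nk km.
    have k0 : (0 < k)%N by apply: leq_trans nk.
    set y := calA Af (compl_fam Pf) k n x.
    have Py : P k y = 0.
      rewrite /y /calA -{1}(subnKC nk) AcompP // /compl_fam /Pf /=.
      by rewrite linearB /= hPproj // subrr Acomp0.
    have := Hd m k k0 km y.
    rewrite /compl_fam /Pf /= Py subr0 normr0 mulr0 add0r.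
    have -> : calA Af (fun n x => x - P n x) m k y = calA Af (compl_fam Pf) m n x.
      rewrite /calA /= Py subr0.
      have -> : (m - n = (k - n) + (m - k))%N by lia.
      by rewrite AcompD (subnKC nk).
    move=> H1; apply: le_trans H1; rewrite ler_wpM2l ?expR_ge0 // lerDr.
    exact: normr_ge0.
  have C10 : 0 <= C1 by rewrite /C1 !mulr_ge0 ?expR_ge0.
  have C20 : 0 <= C2 by rewrite /C2 !mulr_ge0 ?expR_ge0.
  have S1 : (\sum_(n <= j <oo) (expR (al / 2 * (j%:R - n%:R)) * `|calA Af Pf j p x|)%:E
             <= (C1 / (1 - r))%:E)%E.
    apply: lime_le.
      apply: (@is_cvg_nneseries R (fun j => (expR (al / 2 * (j%:R - n%:R)) * `|calA Af Pf j p x|)%:E) xpredT n).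
      by move=> j _ _; rewrite lee_fin mulr_ge0 ?expR_ge0.
    apply: nearW => M; rewrite sumEFin lee_fin.
    apply: (@le_trans _ _ (\sum_(n <= j < M) r ^+ (j - n) * C1)).
      apply: ler_sum_nat => j /andP[nj _].
      rewrite ec // mulrAC mulrC; apply: ler_wpM2l; [exact: exprn_ge0 | exact: T1].
    by rewrite -big_distrl /= mulrC ler_wpM2l // geom_nat // r0 r1.
  have S2 : \sum_(n <= k < m.+1) expR (al / 2 * (m%:R - k%:R)) * `|calA Af (compl_fam Pf) k n x|
             <= C2 / (1 - r).
    apply: (@le_trans _ _ (\sum_(n <= k < m.+1) r ^+ (m - k) * C2)).
      apply: ler_sum_nat => i /andP[ni im]; rewrite ltnS in im.
      rewrite ec // mulrAC mulrC; apply: ler_wpM2l; [exact: exprn_ge0 | exact: T2].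
    rewrite -big_distrl /= mulrC ler_wpM2l // big_nat_rev /=.
    rewrite (@eq_big_nat _ _ _ n m.+1 _ (fun k => r ^+ (k - n))); first by rewrite geom_nat // r0 r1.
    move=> i /andP[ni im]; congr (_ ^+ _); lia.
  apply: (@le_trans _ _ ((C1/(1-r))%:E + (C2/(1-r))%:E)%E).
    by apply: leeD => //; rewrite lee_fin.
  rewrite -EFinD lee_fin le_eqVlt; apply/orP; left; apply/eqP; rewrite /C1 /C2.
  field; lra.
case=> D [d [c [D1 [d0 [c0 H]]]]].
exists (2 * D), d, c; split; first lra.
split=> //; split=> // m n n0 nm x.
have := H m n n n0 (leqnn n) nm x.
have -> : calA Af Pf n n x = P n x by rewrite /calA subnn.
set B := D * _.
have B0 : 0 <= B.
  by rewrite /B mulr_ge0 ?addr_ge0 ?mulr_ge0 ?expR_ge0 // (le_trans ler01 D1).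
move=> HB.
set t1 := expR (d * (m%:R - n%:R)) * `|calA Af Pf m n x|.
set t2 := expR (d * (m%:R - n%:R)) * `|compl_fam Pf n x|.
have ge0a : forall j, (n <= j)%N -> (0 <= (expR (d * (j%:R - n%:R)) * `|calA Af Pf j n x|)%:E)%E.
  by move=> j _; rewrite lee_fin mulr_ge0 ?expR_ge0.
have S0 : (0 <= \sum_(n <= j <oo) (expR (d * (j%:R - n%:R)) * `|calA Af Pf j n x|)%:E)%E.
  exact: (@nneseries_ge0 R (fun j => (expR (d * (j%:R - n%:R)) * `|calA Af Pf j n x|)%:E) xpredT n (fun j h _ => ge0a j h)).
have F0 : 0 <= \sum_(n <= k < m.+1) expR (d * (m%:R - k%:R)) * `|calA Af (compl_fam Pf) k n x|.
  by apply: sumr_ge0 => k _; rewrite mulr_ge0 ?expR_ge0.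
have h1 : t1 <= B.
  rewrite -lee_fin; apply: le_trans HB; rewrite -[t1%:E]adde0; apply: leeD => //.
  apply: le_trans (@nneseries_lim_ge R (fun j => (expR (d * (j%:R - n%:R)) * `|calA Af Pf j n x|)%:E) xpredT n m.+1 (fun j h _ => ge0a j h)).
  rewrite big_nat_recr //= -[X in (X <= _)%E]add0e; apply: leeD => //.
  by rewrite big_nat_cond; apply: sume_ge0 => j /andP[/andP[nj _] _]; apply: ge0a.
have h2 : t2 <= B.
  rewrite -lee_fin; apply: le_trans HB; rewrite -[t2%:E]add0e; apply: leeD => //.
  rewrite lee_fin big_ltn ?ltnS //= /calA subnn /=. rewrite -/t2.
  by rewrite lerDl; apply: sumr_ge0 => k _; rewrite mulr_ge0 ?expR_ge0.
rewrite (_ : 2 * D * _ = 2 * B); last by rewrite /B -mulrA.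
rewrite mulrDr -/t1 -/t2; lra.
Qed.
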